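(* Let $2\le n\le m$. Let $u^0$ be the vertex of $Y_{n,m}$ with $u^0_i=1$ for all $1\le i\le m$ and $u^0_0\equiv-\lfloor (m-n)/2\rfloor\pmod n$, and let $d_0=d(u^0,0)$. Then (1) $d_0=\binom{\lfloor (m+n)/2\rfloor+1}{2}+\binom{\lceil (m-n)/2\rceil+1}{2}$; (2) if $2\nmid(m-n)$, let $u^1$ be the vertex with $u^1_i=0$ for $i=\lceil (m+1)/2\rceil$, $u^1_i=1$ for all other $1\le i\le m$, and $u^1_0\equiv-\lfloor (m-n)/2\rfloor\pmod n$; then $d(u^1,0)=d_0+n-\lceil (m+1)/2\rceil$.
   Context: The Yoke graph $Y_{n,m}$ has vertices the tuples $v=(v_0,\dots,v_{m+1})$ with $v_0,v_{m+1}\in\mathbb{Z}_n$, $v_1,\dots,v_m\in\{0,1\}$, $\sum v_i\equiv0\pmod n$ (so a vertex is determined by $v_0,\dots,v_m$); $u\sim v$ iff there is $0\le i\le m$ with $u_j=v_j$ for $j\notin\{i,i+1\}$ and either ($u_i=v_i+1$, $u_{i+1}=v_{i+1}-1$) or ($u_i=v_i-1$, $u_{i+1}=v_{i+1}+1$), buckets mod $n$. $0$ is the all-zero vertex and $d$ is graph distance. *)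

(* Defs.v *)
From HB Require Import structures.
From mathcomp Require Import all_boot all_order all_algebra.
Set Implicit Arguments. Unset Strict Implicit. Unset Printing Implicit Defensive.
Import Order.TTheory GRing.Theory Num.Theory.

Section GDist.
Variables (T : finType) (e : rel T).

Definition walkb (u v : T) (k : nat) : bool :=
  [exists p : k.-tuple T, path e u p && (last u p == v)].

Lemma connect_walk (u v : T) : connect e u v -> exists k, walkb u v k.
Proof.
move=> /connectP [p pp ->]; exists (size p); apply/existsP.
by exists (in_tuple p); rewrite /= pp eqxx.
Qed.

(* graph distance: least length of a walk; (0 if unreachable, never used) *)
Definition gdist (u v : T) : nat :=
  match @idP (connect e u v) with
  | ReflectT h => ex_minn (connect_walk h)
  | ReflectF _ => 0
  end.
End GDist.

Local Open Scope ring_scope.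
(* A vertex is (v_0, (v_1..v_m)) with v_0 in Z_n (n >= 2) and v_i bits;
   v_{m+1} = -(v_0 + ... + v_m) mod n is determined. *)
Definition yvert (n m : nat) : finType := ('Z_n * {ffun 'I_m -> bool})%type.

(* coordinate k (0 <= k <= m+1) as an integer; for k = 0, m+1 it is a
   representative of the residue mod n. *)
Definition ycoord (n m : nat) (v : yvert n m) (k : nat) : int :=
  if k == 0%N then (val v.1)%:Z
  else if (k <= m)%N then (nth false (fgraph v.2) k.-1 : nat)%:Z
  else - ((val v.1)%:Z + (\sum_(i < m) (v.2 i : nat))%:Z).

Definition yceq (n m k : nat) (a b : int) : bool :=
  if (k == 0%N) || (k == m.+1) then (a == b %[mod n%:Z])%Z else a == b.

Definition yadj (n m : nat) : rel (yvert n m) := fun u v =>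
  [exists i : 'I_m.+1,
     [forall k : 'I_m.+2,
        ((val k != val i) && (val k != (val i).+1)) ==>
          yceq n m k (ycoord u k) (ycoord v k)]
     && ((yceq n m i (ycoord u i) (ycoord v i + 1)
          && yceq n m i.+1 (ycoord u i.+1) (ycoord v i.+1 - 1))
      || (yceq n m i (ycoord u i) (ycoord v i - 1)
          && yceq n m i.+1 (ycoord u i.+1) (ycoord v i.+1 + 1)))].

Definition ydist (n m : nat) (u v : yvert n m) : nat := gdist (@yadj n m) u v.

Definition yzero (n m : nat) : yvert n m := (0%R, [ffun => false]).

Definition yu0 (n m : nat) : yvert n m :=
  (- (((m - n)%N./2)%:R),  [ffun => true]).

(* u^1 : inner bucket ceil((m+1)/2) = (m+2)/2 (1-indexed) is 0, others 1 *)
Definition yu1 (n m : nat) : yvert n m :=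
  (- (((m - n)%N./2)%:R),  [ffun i : 'I_m => (val i).+1 != (m.+2)./2]).

(* Main.v *)
Require Import Defs.
From HB Require Import structures.
From mathcomp Require Import all_boot all_order all_algebra.
From mathcomp Require Import zify ring.
Set Implicit Arguments. Unset Strict Implicit. Unset Printing Implicit Defensive.
Import Order.TTheory GRing.Theory Num.Theory.
Local Open Scope ring_scope.

Lemma modz_ex (x y : int) (n : nat) : (x == y %[mod n%:Z])%Z -> exists c : int, x = y + c * n%:Z.
Proof.
move=> /eqP h. exists ((x %/ n)%Z - (y %/ n)%Z).
have ex := divz_eq x n; have ey := divz_eq y n.
move: ex ey h; move: (x %/ n)%Z (y %/ n)%Z (y %% n)%Z (x %% n)%Z => a b c d -> -> ->. ring.
Qed.
Lemma modz_in (x y c : int) (n : nat) : x = y + c * n%:Z -> (x == y %[mod n%:Z])%Z.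
Proof. by move=> ->; rewrite addrC modzMDl. Qed.

Fixpoint SZ (f : nat -> int) (j : nat) : int :=
  match j with 0 => f 0%N | j'.+1 => SZ f j' + f j'.+1 end.

Lemma SZ_ext f g M : (forall j, (j <= M)%N -> f j = g j) -> SZ f M = SZ g M.
Proof.
elim: M => [|M IH] H /=; first by rewrite H.
by rewrite IH ?H // => j hj; apply: H; lia.
Qed.

Lemma SZ_le f g M : (forall j, (j <= M)%N -> f j <= g j) -> SZ f M <= SZ g M.
Proof.
elim: M => [|M IH] H /=; first by rewrite H.
by rewrite lerD ?H ?IH // => j hj; apply: H; lia.
Qed.

Lemma SZ_ge0 f M : (forall j, (j <= M)%N -> 0 <= f j) -> 0 <= SZ f M.
Proof.
elim: M => [|M IH] H /=; first by rewrite H.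
by rewrite addr_ge0 ?H ?IH // => j hj; apply: H; lia.
Qed.

Lemma SZ_point f g M i : (i <= M)%N -> (forall j, (j <= M)%N -> j != i -> f j = g j) ->
  SZ f M + g i = SZ g M + f i.
Proof.
elim: M => [|M IH] hi H /=.
  have -> : i = 0%N by lia. by rewrite addrC.
case: (ltnP i M.+1) => h.
  rewrite H //; last by lia.
  have := IH (ltnSE h) (fun j hj => H j (leqW hj)). lia.
have -> : i = M.+1 by lia.
rewrite (SZ_ext (g := g)); first by lia.
move=> j hj; apply: H; lia.
Qed.

Lemma SZ_zero f M : (forall j, (j <= M)%N -> 0 <= f j) -> SZ f M = 0 -> forall j, (j <= M)%N -> f j = 0.
Proof.
elim: M => [|M IH] H /= h0 j hj.
  have -> : j = 0%N by lia. done.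
have h1 := SZ_ge0 (fun j hj => H j (leqW hj)).
have h2 := H M.+1 (leqnn _).
case: (ltnP j M.+1) => hj'.
  apply: IH => //; [move=> k hk; apply: H; lia| lia].
have -> : j = M.+1 by lia. lia.
Qed.

Section Y.
Variables (n m : nat).
Hypothesis n2 : (2 <= n)%N.
Hypothesis m1 : (1 <= m)%N.

Notation V := (yvert n m).

Fixpoint hv (v : V) (j : nat) : int :=
  match j with 0 => ycoord v 0 | j'.+1 => hv v j' + ycoord v j'.+1 end.

Lemma hv_sum (v : V) j : (j <= m)%N ->
  hv v j = (val v.1)%:Z + (\sum_(i < j) (nth false (fgraph v.2) i : nat))%:Z.
Proof.
elim: j => [|j IH] hj /=; first by rewrite big_ord0 addr0.
rewrite IH; last by lia.
rewrite big_ord_recr /= /ycoord /=. have -> : (j < m)%N by lia. simpl. lia.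
Qed.

Lemma ycoordE (v : V) k : ycoord v k =
  if k == 0%N then hv v 0 else if (k <= m)%N then hv v k - hv v k.-1 else - hv v m.
Proof.
case: k => [|k] //=.
case: ifP => hk.
  lia.
rewrite [in RHS]hv_sum //.
have -> : \sum_(i < m) (nth false (fgraph v.2) i : nat) = \sum_(i < m) (v.2 i : nat).
  by apply: eq_bigr => i _; rewrite nth_fgraph_ord.
by rewrite /ycoord hk.
Qed.

Lemma yc_last (v : V) : ycoord v m.+1 = - hv v m.
Proof. by rewrite ycoordE ltnn. Qed.
Lemma yc_mid (v : V) k : (0 < k <= m)%N -> ycoord v k = hv v k - hv v k.-1.
Proof. move=> hk; rewrite ycoordE. have -> : (k == 0%N) = false by lia. by have -> : (k <= m)%N by lia. Qed.
Lemma yc_0 (v : V) : ycoord v 0 = hv v 0.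
Proof. by []. Qed.

Lemma hv_step (v : V) j : (j < m)%N -> (hv v j.+1 - hv v j = 0) \/ (hv v j.+1 - hv v j = 1).
Proof.
move=> hj /=. rewrite /ycoord /=. have -> : (j < m)%N by []. simpl.
case: (nth _ _ _); [right|left]; lia.
Qed.

Lemma hv0 (v : V) : hv v 0 = (val v.1)%:Z. Proof. by []. Qed.

Lemma yceq_in k (a b : int) : (0 < k <= m)%N -> yceq n m k a b = (a == b).
Proof. move=> hk; rewrite /yceq. have -> : (k == 0%N) || (k == m.+1) = false by lia. done. Qed.

Lemma yceq_out k (a b : int) : (k == 0%N) || (k == m.+1) -> yceq n m k a b = (a == b %[mod n%:Z])%Z.
Proof. by move=> hk; rewrite /yceq hk. Qed.

Definition rel_h (u w : V) (i : nat) (s c : int) :=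
  forall j, (j <= m)%N -> hv u j = hv w j + c * n%:Z + ((j == i) : nat)%:Z * s.

Lemma adj_rel u w : yadj u w -> exists i s c, [/\ (i <= m)%N, (s = 1 \/ s = -1) & rel_h u w i s c].
Proof.
move=> /existsP [[i hi] /andP [/forallP H Hd]]; simpl in Hd.
have Hk : forall k, (k < m.+2)%N -> k != i -> k != i.+1 -> yceq n m k (ycoord u k) (ycoord w k).
  move=> k hk h1 h2; have := H (Ordinal hk); by rewrite /= h1 h2.
have [s [hs Hi1 Hi2]] : exists s : int, [/\ s = 1 \/ s = -1,
    yceq n m i (ycoord u i) (ycoord w i + s) & yceq n m i.+1 (ycoord u i.+1) (ycoord w i.+1 - s)].
  case/orP: Hd => /andP [h1 h2]; [exists 1 | exists (-1)]; split; auto; by rewrite ?opprK.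
have [c hc] : exists c : int, ycoord u 0 = ycoord w 0 + c * n%:Z + ((0%N == i) : nat)%:Z * s.
  case: (eqVneq (i) 0%N) => hi0.
    move: Hi1; rewrite hi0 yceq_out // => /modz_ex [c hc]; exists c; rewrite hc /=; lia.
  have := Hk 0%N isT ltac:(lia) ltac:(lia); rewrite yceq_out // => /modz_ex [c hc].
  exists c; rewrite hc; lia.
exists i, s, c; split => //.
elim => [|j IH] hj; first by rewrite /= hc.
rewrite /= IH; last by lia.
have E : ycoord u j.+1 = ycoord w j.+1 + ((j.+1 == i) : nat)%:Z * s - ((j == i) : nat)%:Z * s.
  case: (eqVneq j.+1 (i)) => e1.
    move: Hi1; rewrite -e1 yceq_in; last by lia. move/eqP => ->. lia.
  case: (eqVneq j (i)) => e2.
    move: Hi2; rewrite -e2 yceq_in; last by lia. move/eqP => ->. lia.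
  have := Hk j.+1 ltac:(lia) e1 ltac:(lia); rewrite yceq_in; last by lia.
  move/eqP => ->. lia.
rewrite E. lia.
Qed.

Lemma rel_adj u w i s c : (i <= m)%N -> (s = 1 \/ s = -1) -> rel_h u w i s c -> yadj u w.
Proof.
move=> hi hs R.
have hi1 : (i < m.+1)%N by lia.
apply/existsP; exists (Ordinal hi1).
apply/andP; split.
  apply/forallP => [[k hk]] /=; apply/implyP => /andP [k1 k2].
  case: (eqVneq k 0%N) => k0.
    rewrite k0 yceq_out // !yc_0; apply: (modz_in (c := c)). have /= := R 0%N isT. lia.
  case: (eqVneq k m.+1) => km.
    rewrite km yceq_out; last by rewrite eqxx orbT. rewrite !yc_last.
    apply: (modz_in (c := -c)). have := R m (leqnn _). lia.
  rewrite yceq_in; last by lia.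
  rewrite !yc_mid ?succnK; try lia.
  apply/eqP. have := R k ltac:(lia). have := R k.-1 ltac:(lia). lia.
case: hs => hs; [apply/orP; left | apply/orP; right]; apply/andP; split => /=.
- case: (eqVneq i 0%N) => i0.
    rewrite i0 yceq_out // !yc_0; apply: (modz_in (c := c)). have /= := R 0%N isT. rewrite i0. lia.
  rewrite yceq_in; last by lia.
  rewrite !yc_mid ?succnK; try lia.
  apply/eqP. have := R i ltac:(lia). have := R i.-1 ltac:(lia). lia.
- case: (eqVneq i m) => im.
    rewrite im yceq_out; last by rewrite eqxx orbT. rewrite !yc_last.
    apply: (modz_in (c := -c)). have := R m (leqnn _). rewrite im. lia.
  rewrite yceq_in; last by lia.
  rewrite !yc_mid ?succnK; try lia.
  apply/eqP. have := R i ltac:(lia). have := R i.+1 ltac:(lia). lia.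
- case: (eqVneq i 0%N) => i0.
    rewrite i0 yceq_out // !yc_0; apply: (modz_in (c := c)). have /= := R 0%N isT. rewrite i0. lia.
  rewrite yceq_in; last by lia.
  rewrite !yc_mid ?succnK; try lia.
  apply/eqP. have := R i ltac:(lia). have := R i.-1 ltac:(lia). lia.
- case: (eqVneq i m) => im.
    rewrite im yceq_out; last by rewrite eqxx orbT. rewrite !yc_last.
    apply: (modz_in (c := -c)). have := R m (leqnn _). rewrite im. lia.
  rewrite yceq_in; last by lia.
  rewrite !yc_mid ?succnK; try lia.
  apply/eqP. have := R i ltac:(lia). have := R i.+1 ltac:(lia). lia.
Qed.


Lemma yc_bit (v : V) j (hj : (j < m)%N) : ycoord v j.+1 = (v.2 (Ordinal hj) : nat)%:Z.
Proof.
rewrite /ycoord /=. have -> : (j < m)%N by []. simpl.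
by have := nth_fgraph_ord false (Ordinal hj) v.2 => /= ->.
Qed.

Lemma val_lt (v : V) : (val v.1 < n)%N.
Proof. change (nat_of_ord v.1 < n)%N. have := ltn_ord v.1. have := Zp_cast n2. move: (nat_of_ord v.1) => x. lia. Qed.

Definition mkv (h : nat -> int) : V :=
  (inZp (absz (h 0%N %% n)%Z), [ffun x : 'I_m => h (val x).+1 - h (val x) == 1]).

Lemma hv_mkv h : (forall j, (j < m)%N -> h j.+1 - h j = 0 \/ h j.+1 - h j = 1) ->
  forall j, (j <= m)%N -> hv (mkv h) j = h j - (h 0%N %/ n)%Z * n%:Z.
Proof.
move=> Hs; elim => [|j IH] hj.
  rewrite hv0 /= Zp_cast //.
  move: (h 0%N) => x.
  have hr : (0 <= x %% n)%Z by apply: modz_ge0; lia.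
  have hr2 : (x %% n < n)%Z by apply: ltz_pmod; lia.
  have e := divz_eq x n.
  move: hr hr2 e; move: (x %% n)%Z (x %/ n)%Z => r q hr hr2 e.
  rewrite modn_small; last by lia.
  lia.
have hj' : (j < m)%N by lia.
rewrite /= IH; last by lia.
rewrite (yc_bit _ hj') ffunE /=.
case: (Hs j hj') => e; rewrite e /=; lia.
Qed.

Lemma mono (g : nat -> int) M : (forall j, (j < M)%N -> g j.+1 - g j = 0 \/ g j.+1 - g j = 1) ->
  forall j1 j2, (j1 <= j2 <= M)%N -> g j1 <= g j2.
Proof.
move=> Hs j1; elim => [|j2 IH] h.
  have -> : j1 = 0%N by lia. done.
case: (eqVneq j1 j2.+1) => [->//|ne].
have := IH ltac:(lia). have := Hs j2 ltac:(lia). lia.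
Qed.

Definition valid (g : nat -> int) M := forall j, (j < M)%N -> g j.+1 - g j = 0 \/ g j.+1 - g j = 1.

Lemma descent (g : nat -> int) M : valid g M -> (exists j, (j <= M)%N /\ g j != 0) ->
  exists i s, [/\ (i <= M)%N, s = 1 \/ s = -1, `|g i - s| + 1 = `|g i| &
     valid (fun j => g j - ((j == i) : nat)%:Z * s) M].
Proof.
move=> Hs [j0 [hj0 nz]].
have Mo := mono Hs.
case: (ltrP 0 (g M)) => gM.
  have exP : exists t, g t == g M by exists M.
  case: (ex_minnP exP) => i /eqP gi imin.
  have iM : (i <= M)%N by apply: imin.
  exists i, 1; split => //; first by left.
    lia.
  move=> j hj /=.
  case: (eqVneq j.+1 i) => e1.
    have h1 : g j != g M by apply/negP => /imin; lia.
    have := Mo j i ltac:(lia). have := Hs j hj. subst i. lia.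
  case: (eqVneq j i) => e2.
    have := Mo i j.+1 ltac:(lia). have := Mo j.+1 M ltac:(lia). subst i. lia.
  have := Hs j hj. lia.
have g0 : g 0%N < 0.
  have := Mo 0%N j0 ltac:(lia). have := Mo j0 M ltac:(lia). lia.
have exP : exists t, (t <= M)%N && (g (M - t)%N == g 0%N).
  exists M; rewrite leqnn subnn eqxx //.
case: (ex_minnP exP) => t /andP [tM /eqP gt] tmin.
exists (M - t)%N, (-1); split => //; first by lia. by right. lia.
move=> j hj /=.
case: (eqVneq j (M - t)%N) => e2.
  have h1 : g j.+1 != g 0%N.
    apply/negP => /eqP e. have := tmin (M - j.+1)%N. rewrite subKn; last by lia.
    rewrite e eqxx. have -> : (M - j.+1 <= M)%N by lia. move=> /(_ isT). lia.
  have := Hs j hj. rewrite -e2 in gt. lia.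
case: (eqVneq j.+1 (M - t)%N) => e1.
  have := Mo 0%N j ltac:(lia). have := Mo j j.+1 ltac:(lia). rewrite -e1 in gt. lia.
have := Hs j hj. lia.
Qed.

Definition Phi (v : V) (k : int) := SZ (fun j => `|hv v j + k * n%:Z|) m.

Lemma Phi_ge0 v k : 0 <= Phi v k.
Proof. by apply: SZ_ge0 => j _. Qed.

Lemma Phi_adj u w : yadj u w -> forall k', exists k, Phi u k <= Phi w k' + 1.
Proof.
move=> /adj_rel [i [s [c [hi hs R]]]] k'.
exists (k' - c).
have E : SZ (fun j => `|hv u j + (k' - c) * n%:Z|) m + `|hv w i + k' * n%:Z|
   = SZ (fun j => `|hv w j + k' * n%:Z|) m + `|hv u i + (k' - c) * n%:Z|.
  apply: SZ_point => // j hj ne. rewrite R //. congr `|_|. have -> : (j == i) = false by lia. lia.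
rewrite /Phi. have := R i hi. case: hs => hs; lia.
Qed.

Lemma SZ_pos_ex f M : 0 < SZ f M -> exists j, (j <= M)%N /\ f j != 0.
Proof.
elim: M => [|M IH] /= h.
  exists 0%N; split => //; lia.
case: (eqVneq (f M.+1) 0) => e.
  have [j [hj nz]] := IH ltac:(lia). exists j; split => //; lia.
by exists M.+1.
Qed.

Lemma Phi_desc v k : 0 < Phi v k -> exists w k', yadj v w /\ Phi w k' + 1 = Phi v k.
Proof.
move=> hp.
pose g j := hv v j + k * n%:Z.
have vg : valid g m by move=> j hj; rewrite /g; have := hv_step v hj; lia.
have [j [hj nz]] := SZ_pos_ex hp.
have nz' : g j != 0 by move: nz; rewrite /g /=; lia.
have [i [s [hi hs hab vg']]] := descent vg (ex_intro _ j (conj hj nz')).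
pose g' j := g j - ((j == i) : nat)%:Z * s.
have Hw := hv_mkv vg'.
move: Hw; move: (g' 0%N %/ n)%Z => q Hw.
exists (mkv g'), q; split.
  apply: (rel_adj (c := q - k) hi hs) => j1 hj1.
  rewrite Hw // /g' /g. lia.
rewrite /Phi.
have E : SZ (fun j => `|hv (mkv g') j + q * n%:Z|) m + `|hv v i + k * n%:Z|
   = SZ (fun j => `|hv v j + k * n%:Z|) m + `|hv (mkv g') i + q * n%:Z|.
  apply: SZ_point => // j' hj' ne. rewrite Hw // /g' /g. have -> : (j' == i) = false by lia. congr `|_|. lia.
move: E; rewrite Hw // /g' /g eqxx. move: hab; rewrite /g. lia.
Qed.

Lemma Phi_zero v k : Phi v k = 0 -> v = yzero n m.
Proof.
move=> h0.
have Z := SZ_zero (f := fun j => `|hv v j + k * n%:Z|) (fun j _ => normr_ge0 _) h0.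
have Z' : forall j, (j <= m)%N -> hv v j + k * n%:Z = 0.
  by move=> j hj; apply/normr0_eq0; apply: Z.
have v0 : val v.1 = 0%N.
  have := Z' 0%N isT. rewrite hv0. have := val_lt v.
  case: (ltrP k 0) => hk.
    have : 0 <= (- k - 1) * n%:Z by apply: mulr_ge0; lia. lia.
  case: (ltrP 0 k) => hk'.
    have : 0 <= (k - 1) * n%:Z by apply: mulr_ge0; lia. lia.
  have -> : k = 0 by lia. lia.
case: v Z' v0 {Z h0} => a f Z' v0.
rewrite /yzero; congr pair.
  by apply/val_inj; rewrite /= v0.
apply/ffunP => [[x hx]]; rewrite ffunE.
have := yc_mid (a, f) (k := x.+1) ltac:(lia). rewrite succnK (yc_bit (a,f) hx) /=.
have := Z' x.+1 ltac:(lia). have := Z' x ltac:(lia).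
case: (f (Ordinal hx)) => //=. lia.
Qed.

Lemma Phi_yzero : Phi (yzero n m) 0 = 0.
Proof.
have H : forall j, (j <= m)%N -> hv (yzero n m) j = 0.
  elim => [|j IH] hj //.
  have hj' : (j < m)%N by lia.
  by rewrite /= IH ?(yc_bit _ hj') ?ffunE //; lia.
rewrite /Phi (SZ_ext (g := fun _ => 0)).
  by elim: m => //= M ->.
by move=> j hj; rewrite H // mul0r addr0.
Qed.

Lemma walk_lb p v : path (@yadj n m) v p -> last v p = yzero n m ->
  exists k, Phi v k <= (size p)%:Z.
Proof.
elim: p v => [|x p IH] v /=.
  by move=> _ ->; exists 0; rewrite Phi_yzero.
move=> /andP [a pp] l.
have [k' hk'] := IH x pp l.
have [k hk] := Phi_adj a k'.
exists k. apply: (le_trans hk). rewrite -addn1 PoszD lerD2r. exact: hk'.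
Qed.

Lemma walk_ub (N : nat) v k : Phi v k = N%:Z -> walkb (@yadj n m) v (yzero n m) N.
Proof.
elim: N v k => [|N IH] v k h.
  rewrite (Phi_zero h). apply/existsP. exists [tuple]. by rewrite /= eqxx.
have hp : 0 < Phi v k by rewrite h.
have [w [k' [a hw]]] := Phi_desc hp.
have hw' : Phi w k' = N%:Z by apply: (@addIr _ 1); rewrite hw h -addn1 PoszD.
have /existsP [p /andP [pp lp]] := IH w k' hw'.
apply/existsP; exists (cons_tuple w p) => /=.
by rewrite a pp lp.
Qed.

End Y.

Lemma gdist_spec (T : finType) (e : rel T) u v L : walkb e u v L ->
  walkb e u v (gdist e u v) /\ (gdist e u v <= L)%N.
Proof.
move=> hw.
rewrite /gdist; destruct (@idP (connect e u v)) as [h|nh].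
  case: (ex_minnP (@connect_walk T e u v h)) => d hd dmin.
  split => //; exact: dmin.
exfalso; apply: nh.
move: hw => /existsP [p /andP [pp /eqP lp]].
apply/connectP; exists p => //.
Qed.

Definition A M (a : int) := SZ (fun j => `|a + j%:Z|) M.

Lemma SZ_lin (f g : nat -> int) (x y : int) M :
  SZ (fun j => f j * (x + g j)) M = SZ (fun j => f j * (y + g j)) M + (x - y) * SZ f M.
Proof. elim: M => [|M IH] /=; [ring | rewrite IH; ring]. Qed.

Lemma SZ_sig (q M : nat) :
  SZ (fun j => if (j < q)%N then -1 else 1) M = M.+1%:Z - 2 * (minn q M.+1)%:Z.
Proof.
elim: M => [|M IH] /=; first by case: q => [|q] /=; lia.
rewrite IH. case: ifP => h; lia.
Qed.

Lemma LB M p q a : (q <= M.+1)%N -> (q = p \/ q = p.+1) ->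
  A M (- (p%:Z)) + (a + p%:Z) * (M.+1%:Z - 2 * q%:Z) <= A M a.
Proof.
move=> hq hpq.
pose sig j : int := if (j < q)%N then -1 else 1.
have h1 : SZ (fun j => sig j * (a + j%:Z)) M <= A M a.
  apply: SZ_le => j _. rewrite /sig; case: ifP => _; lia.
have h2 := SZ_lin sig (fun j => j%:Z) a (- (p%:Z)) M.
have h3 : SZ (fun j => sig j * (- (p%:Z) + j%:Z)) M = A M (- (p%:Z)).
  apply: SZ_ext => j _. rewrite /sig; case: ifP => h; lia.
have h4 := SZ_sig q M.
have e : minn q M.+1 = q by lia.
rewrite e in h4. rewrite /sig in h2 h3.
rewrite h3 h4 in h2. rewrite h2 in h1. move: h1. 
have -> : a - - (p%:Z) = a + p%:Z by ring. done.
Qed.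

Lemma CF1 M p : (M <= p)%N -> 2 * A M (- (p%:Z)) = M.+1%:Z * (2 * p%:Z - M%:Z).
Proof.
elim: M => [|M IH] hM /=; first by rewrite /A /=; lia.
rewrite /A /= -/(A M _). 
have := IH ltac:(lia). lia.
Qed.

Lemma CF2 d p : 2 * A (p + d) (- (p%:Z)) = p%:Z * p.+1%:Z + d%:Z * d.+1%:Z.
Proof.
elim: d => [|d IH].
  rewrite addn0 CF1 //. lia.
rewrite addnS /A /= -/(A _ _). move: IH. lia.
Qed.

Lemma r_mod (n k : nat) : (1 < n)%N -> exists q : nat, (val (- (k%:R) : 'Z_n) + k = q * n)%N.
Proof.
move=> hn.
have := congr1 val (addNr (k%:R : 'Z_n)).
rewrite /= (val_Zp_nat hn). 
rewrite Zp_cast // modnDmr => h; apply/dvdnP; by rewrite /dvdn h.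
Qed.

Lemma dist_eq n m (n2 : (2 <= n)%N) (m1 : (1 <= m)%N) (v : yvert n m) (D : nat) :
  (forall k, D%:Z <= Phi v k) -> (exists k, Phi v k = D%:Z) -> ydist v (yzero n m) = D.
Proof.
move=> hlb [k hk].
have [hw hle] := gdist_spec (walk_ub n2 m1 hk).
apply/eqP; rewrite eqn_leq hle /=.
move: hw => /existsP [p /andP [pp /eqP lp]].
have [k' hk'] := walk_lb n2 m1 pp lp.
have := hlb k'. rewrite size_tuple in hk' => h.
have : (D%:Z <= (gdist (yadj (m:=m)) v (yzero n m))%:Z) by exact: le_trans h hk'.
by rewrite lez_nat.
Qed.

Lemma hv_yu0 n m j : (j <= m)%N -> hv (yu0 n m) j = (val (yu0 n m).1)%:Z + j%:Z.
Proof.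
elim: j => [|j IH] hj; first by rewrite hv0 addr0.
have hj' : (j < m)%N by lia.
rewrite /= IH; last by lia.
rewrite (yc_bit _ hj') ffunE /=. lia.
Qed.

Lemma hv_yu1 n m j : (j <= m)%N -> hv (yu1 n m) j =
  (val (yu1 n m).1)%:Z + j%:Z - (((m.+2)./2 <= j)%N : nat)%:Z.
Proof.
elim: j => [|j IH] hj.
  rewrite hv0. have -> : ((m.+2)./2 <= 0)%N = false by lia. lia.
have hj' : (j < m)%N by lia.
rewrite /= IH; last by lia.
rewrite (yc_bit _ hj') ffunE /=. 
case: (eqVneq j.+1 (m.+2)./2) => e /=.
  rewrite e leqnn. have -> : ((m.+2)./2 <= j)%N = false by lia. lia.
case: (leqP (m.+2)./2 j) => h1.
  have -> : ((m.+2)./2 <= j.+1)%N by lia. lia.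
have -> : ((m.+2)./2 <= j.+1)%N = false by lia. lia.
Qed.

Lemma Bsplit (a : int) c d : (1 <= c)%N ->
  SZ (fun j => `|a + j%:Z - ((c <= j)%N : nat)%:Z|) (c + d) = A (c + d).-1 a + `|a + c%:Z - 1|.
Proof.
move=> hc.
elim: d => [|d IH].
  case: c hc => [//|c] _. rewrite addn0 /=.
  congr (_ + _); last by lia.
  apply: SZ_ext => j hj. have -> : (c < j)%N = false by lia. lia.
rewrite addnS /= IH.
have hcd : (c <= (c+d).+1)%N by lia. rewrite hcd.
have pos : (0 < c + d)%N by lia.
move: pos; case: (c + d)%N => [|M] pos //=.
rewrite /A /= -/(A _ _). lia.
Qed.

Lemma arith0 (p1 n e : nat) (a t : int) : (e <= 1)%N -> (2 <= n)%N ->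
  a = - ((p1 + n)%N%:Z) + t * n%:Z ->
  A (2 * p1 + n + e) (- ((p1 + n)%N%:Z)) <= A (2 * p1 + n + e) a.
Proof.
move=> he hn ea.
have C1 := CF2 (p1 + n + e) p1.
have C0 := CF2 (p1 + e) (p1 + n).
have E1 : (p1 + (p1 + n + e) = 2 * p1 + n + e)%N by lia.
have E0 : (p1 + n + (p1 + e) = 2 * p1 + n + e)%N by lia.
rewrite E1 in C1; rewrite E0 in C0.
case: (lerP t 0) => ht.
  have L := LB a (M := (2 * p1 + n + e)%N) (p := (p1 + n)%N) (q := (p1 + n)%N) ltac:(lia) (or_introl erefl).
  have : 0 <= (a + (p1 + n)%N%:Z) * ((2 * p1 + n + e)%N.+1%:Z - 2 * (p1 + n)%N%:Z).
    apply: mulr_le0; last by lia.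
    rewrite ea. have : t * n%:Z <= 0 by apply: mulr_le0_ge0; lia. lia.
  lia.
have L := LB a (M := (2 * p1 + n + e)%N) (p := p1) (q := p1.+1) ltac:(lia) (or_intror erefl).
have : 0 <= (a + p1%:Z) * ((2 * p1 + n + e)%N.+1%:Z - 2 * p1.+1%:Z).
  apply: mulr_ge0; last by lia.
  rewrite ea. have : 0 <= (t - 1) * n%:Z by apply: mulr_ge0; lia. lia.
move=> P.
have : A (2 * p1 + n + e) (- (p1%:Z)) >= A (2 * p1 + n + e) (- ((p1 + n)%N%:Z)).
  case: e he C1 C0 {E1 E0 L P} => [|[|//]] _ C1 C0; lia.
lia.
Qed.

Lemma val0 (p1 n e : nat) :
  2 * A (2 * p1 + n + e) (- ((p1 + n)%N%:Z)) = (p1 + n)%N%:Z * (p1 + n).+1%:Z + (p1 + e)%N%:Z * (p1 + e).+1%:Z.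
Proof.
have C0 := CF2 (p1 + e) (p1 + n).
have E0 : (p1 + n + (p1 + e) = 2 * p1 + n + e)%N by lia.
by rewrite E0 in C0.
Qed.

Lemma arith1 (p1 n c : nat) (a t : int) : (2 <= n)%N ->
  (2 * p1 + n + 2 <= 2 * c <= 2 * p1 + n + 3)%N ->
  a = - ((p1 + n)%N%:Z) + t * n%:Z ->
  A (2 * p1 + n) (- ((p1 + n)%N%:Z)) + `|- ((p1 + n)%N%:Z) + c%:Z - 1|
    <= A (2 * p1 + n) a + `|a + c%:Z - 1|.
Proof.
move=> hn hc ea.
have C1 := CF2 (p1 + n) p1.
have C0 := CF2 p1 (p1 + n).
have E1 : (p1 + (p1 + n) = 2 * p1 + n)%N by lia.
have E0 : (p1 + n + p1 = 2 * p1 + n)%N by lia.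
rewrite E1 in C1; rewrite E0 in C0.
case: (lerP t 0) => ht.
  have L := LB a (M := (2 * p1 + n)%N) (p := (p1 + n)%N) (q := (p1 + n)%N) ltac:(lia) (or_introl erefl).
  have : 0 <= (a + (p1 + n)%N%:Z) * (- n%:Z).
    apply: mulr_le0; last by lia.
    rewrite ea. have : t * n%:Z <= 0 by apply: mulr_le0_ge0; lia. lia.
  lia.
have L := LB a (M := (2 * p1 + n)%N) (p := p1) (q := p1.+1) ltac:(lia) (or_intror erefl).
have : 0 <= (a + p1%:Z) * n%:Z.
  apply: mulr_ge0; last by lia.
  rewrite ea. have : 0 <= (t - 1) * n%:Z by apply: mulr_ge0; lia. lia.
lia.
Qed.

Lemma bin2x x : (2 * 'C(x.+1, 2) = x.+1 * x)%N.
Proof.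
elim: x => [//|x IH].
rewrite binS bin1 mulnDr IH. lia.
Qed.

Lemma main_aux (n m : nat) (h2n : (2 <= n)%N) (hnm : (n <= m)%N) :
  ydist (yu0 n m) (yzero n m)
    = ('C(((m + n)./2).+1, 2) + 'C((uphalf (m - n)).+1, 2))%N
  /\ (odd (m - n) ->
      (ydist (yu1 n m) (yzero n m) + uphalf m.+1
        = ydist (yu0 n m) (yzero n m) + n)%N).
Proof.
have m1 : (1 <= m)%N by lia.
set p1 := ((m - n)./2)%N.
set e := odd (m - n).
have em : m = (2 * p1 + n + e)%N by rewrite /p1 /e; lia.
have [q hq] := r_mod p1 h2n.
set r := val (- (p1%:R) : 'Z_n) in hq.
have hr : (val (yu0 n m).1 = r) by [].
have hr1 : (val (yu1 n m).1 = r) by [].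
set D := ('C(((m + n)./2).+1, 2) + 'C((uphalf (m - n)).+1, 2))%N.
have hD : 2 * D%:Z = (p1 + n)%N%:Z * (p1 + n).+1%:Z + (p1 + e)%N%:Z * (p1 + e).+1%:Z.
  have e1 : ((m + n)./2 = p1 + n)%N by rewrite /p1; lia.
  have e2 : (uphalf (m - n) = p1 + e)%N by rewrite /p1 /e; lia.
  rewrite /D e1 e2. have := bin2x (p1 + n). have := bin2x (p1 + e). lia.
have Phi0 : forall k, Phi (yu0 n m) k = A m (r%:Z + k * n%:Z).
  move=> k; apply: SZ_ext => j hj. rewrite hv_yu0 // hr. congr `|_|. lia.
have VD : A m (- ((p1 + n)%N%:Z)) = D%:Z.
  have := val0 p1 n e. rewrite -em. lia.
have part1 : ydist (yu0 n m) (yzero n m) = D.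
  apply: dist_eq => //.
    move=> k. rewrite Phi0 -VD em.
    apply: (arith0 (t := q%:Z + k + 1)); [lia | lia | lia].
  exists (- (q%:Z) - 1). rewrite Phi0 -VD. congr A. lia.
split => //.
move=> ho.
have e1 : e = true by [].
set c := uphalf m.+1.
have hc : c = (m.+2)./2 by [].
have hcm : (2 * p1 + n + 2 <= 2 * c <= 2 * p1 + n + 3)%N by rewrite hc; lia.
have c1 : (1 <= c <= m)%N by lia.
have Phi1 : forall k, Phi (yu1 n m) k = A (m.-1) (r%:Z + k * n%:Z) + `|r%:Z + k * n%:Z + c%:Z - 1|.
  move=> k.
  have em' : m = (c + (m - c))%N by lia.
  rewrite /Phi. transitivity (SZ (fun j => `|(r%:Z + k * n%:Z) + j%:Z - ((c <= j)%N : nat)%:Z|) m).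
    apply: SZ_ext => j hj. rewrite hv_yu1 // hr1 -hc. congr `|_|. lia.
  rewrite [in X in SZ _ X]em' Bsplit; last by lia.
  by rewrite -em'.
have em1 : (m.-1 = 2 * p1 + n)%N by lia.
have V1 : 2 * (A (2 * p1 + n) (- ((p1 + n)%N%:Z)) + `|- ((p1 + n)%N%:Z) + c%:Z - 1|)
     = 2 * D%:Z + 2 * n%:Z - 2 * c%:Z.
  have C0 := CF2 p1 (p1 + n).
  have E0 : (p1 + n + p1 = 2 * p1 + n)%N by lia.
  rewrite E0 in C0. rewrite hD. lia.
have part2 : ydist (yu1 n m) (yzero n m) = (D + n - c)%N.
  apply: dist_eq => //.
    move=> k. rewrite Phi1 em1.
    have := arith1 (a := r%:Z + k * n%:Z) (t := q%:Z + k + 1) h2n hcm ltac:(lia).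
    lia.
  exists (- (q%:Z) - 1). rewrite Phi1 em1.
  have -> : r%:Z + (- (q%:Z) - 1) * n%:Z = - ((p1 + n)%N%:Z) by lia.
  lia.
rewrite part1 part2. lia.
Qed.

Local Close Scope ring_scope.

Theorem lemma4p24 (n m : nat) (h2n : (2 <= n)%N) (hnm : (n <= m)%N) :
  ydist (yu0 n m) (yzero n m)
    = ('C(((m + n)./2).+1, 2) + 'C((uphalf (m - n)).+1, 2))%N
  /\ (odd (m - n) ->
      (ydist (yu1 n m) (yzero n m) + uphalf m.+1
        = ydist (yu0 n m) (yzero n m) + n)%N).
Proof. exact: main_aux. Qed.
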